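(* Let $G>0$, $T>0$, and let $F\colon\mathbb R\to\mathbb R^2$ be $T$-periodic and of class $C^1$. There exists $a_0\in(0,1)$ such that for every $a$ with $a_0\le a<1$, the function $m_a(t,x,p)=\tfrac12|x|^2-\tfrac12a^2$ is a curvature bound function for $v_\lambda$ for all $\lambda\in[0,1]$.
   Context: Let $\Omega=\{(x,p)\in\mathbb R^2\times\mathbb R^2:|x|<1\}$. For $\lambda\in[0,1]$, $v_\lambda\colon\mathbb R\times\Omega\to\mathbb R\times\mathbb R^2\times\mathbb R^2$ is \[ v_\lambda(t,x,p)=\Big(1,\ p,\ \Big(G\sqrt{1-|x|^2}-\tfrac{(x^Tp)^2}{1-|x|^2}-|p|^2\Big)x+\lambda\big((x^TF(t))x-F(t)\big)\Big), \] the right-hand side of $\dot t=1$, $\dot x=p$, $\dot p=\dots$. A $C^2$ function $e$ on an open subset $W$ of $\mathbb R\times\Omega$ is a curvature bound function for $v$ if for every $z\in W$ with $e(z)=0$: $De(z)v(z)=0$ implies $v(z)^TD^2e(z)v(z)+De(z)Dv(z)v(z)>0$, where $De$ is the derivative (row vector) with respect to all variables $(t,x,p)$, $D^2e$ the Hessian and $Dv$ the Jacobian matrix. Here $m_a$ is considered on all of $\mathbb R\times\Omega$. *)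

(* Defs.v *)
From Stdlib Require Import Reals Lra.
From Coquelicot Require Import Coquelicot.
Open Scope R_scope.

(* Points of R x R^2 x R^2, ordered as (t, x1, x2, p1, p2). *)
Definition pt : Type := (R * R * R * R * R)%type.

Definition mkpt (t x1 x2 p1 p2 : R) : pt := (t, x1, x2, p1, p2).

Definition coord (i : nat) (z : pt) : R :=
  match z with (t, x1, x2, p1, p2) =>
    match i with 0 => t | 1 => x1 | 2 => x2 | 3 => p1 | 4 => p2 | _ => 0 end
  end.

Definition shift (i : nat) (s : R) (z : pt) : pt :=
  match z with (t, x1, x2, p1, p2) =>
    match i with
    | 0 => (t + s, x1, x2, p1, p2)
    | 1 => (t, x1 + s, x2, p1, p2)
    | 2 => (t, x1, x2 + s, p1, p2)
    | 3 => (t, x1, x2, p1 + s, p2)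
    | 4 => (t, x1, x2, p1, p2 + s)
    | _ => (t, x1, x2, p1, p2)
    end
  end.

Definition partial (f : pt -> R) (i : nat) (z : pt) : R :=
  Derive (fun s => f (shift i s z)) 0.

Definition sum5 (g : nat -> R) : R := sum_f_R0 g 4.

Definition C2_on (W : pt -> Prop) (e : pt -> R) : Prop :=
  forall z, W z ->
    (forall i, (i <= 4)%nat ->
       ex_derive (fun s => e (shift i s z)) 0 /\ continuous (partial e i) z) /\
    (forall i j, (i <= 4)%nat -> (j <= 4)%nat ->
       ex_derive (fun s => partial e j (shift i s z)) 0 /\
       continuous (partial (partial e j) i) z).

Definition De (e : pt -> R) (z w : pt) : R :=
  sum5 (fun i => partial e i z * coord i w).

Definition D2e_quad (e : pt -> R) (z w : pt) : R :=
  sum5 (fun i => sum5 (fun j => coord i w * partial (partial e j) i z * coord j w)).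

Definition De_Dv (e : pt -> R) (v : pt -> pt) (z w : pt) : R :=
  sum5 (fun k => partial e k z *
          sum5 (fun j => partial (fun y => coord k (v y)) j z * coord j w)).

Definition curvature_bound_function (W : pt -> Prop) (v : pt -> pt)
    (e : pt -> R) : Prop :=
  C2_on W e /\
  forall z, W z -> e z = 0 -> De e z (v z) = 0 ->
    D2e_quad e z (v z) + De_Dv e v z (v z) > 0.

Definition RxOmega (z : pt) : Prop := coord 1 z ^ 2 + coord 2 z ^ 2 < 1.

Definition v_lam (G : R) (F1 F2 : R -> R) (lam : R) (z : pt) : pt :=
  match z with (t, x1, x2, p1, p2) =>
    let nx2 := x1 ^ 2 + x2 ^ 2 in
    let xp := x1 * p1 + x2 * p2 in
    let np2 := p1 ^ 2 + p2 ^ 2 in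
    let c := G * sqrt (1 - nx2) - xp ^ 2 / (1 - nx2) - np2 in
    let xF := x1 * F1 t + x2 * F2 t in
    (1, p1, p2, c * x1 + lam * (xF * x1 - F1 t), c * x2 + lam * (xF * x2 - F2 t))
  end.

Definition m_a (a : R) (z : pt) : R :=
  / 2 * (coord 1 z ^ 2 + coord 2 z ^ 2) - / 2 * a ^ 2.

Definition is_C1 (f : R -> R) : Prop :=
  forall t, ex_derive f t /\ continuous (Derive f) t.

(* Main.v *)
Require Import Defs.
From Stdlib Require Import Reals Lra Psatz FunctionalExtensionality ZArith Lia.
From Coquelicot Require Import Coquelicot.
Open Scope R_scope.

Definition fm (j : nat) (z : pt) : R :=
  match j with 1 => coord 1 z | 2 => coord 2 z | _ => 0 end.

Lemma pm a : forall j, partial (m_a a) j = fm j.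
Proof.
  intro j; apply functional_extensionality; intros [[[[t x1] x2] p1] p2].
  unfold partial, m_a.
  destruct j as [|[|[|[|[|j]]]]]; simpl; apply is_derive_unique; auto_derive; auto; try ring; try field.
  all: idtac.
Qed.

Definition fmm (j i : nat) : R :=
  match j, i with 1, 1 => 1 | 2, 2 => 1 | _, _ => 0 end.

Lemma ppm : forall j i, partial (fm j) i = fun _ => fmm j i.
Proof.
  intros j i; apply functional_extensionality; intros [[[[t x1] x2] p1] p2].
  unfold partial.
  destruct j as [|[|[|j]]]; destruct i as [|[|[|[|[|i]]]]]; simpl; apply is_derive_unique; auto_derive; auto; try ring; try field.
  all: idtac.
Qed.

Lemma coord1_cont : forall z, continuous (coord 1) z.
Proof.
  intros [[[[t x1] x2] p1] p2].
  apply continuous_ext with (f := fun z : pt => snd (fst (fst (fst z)))).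
  { intros [[[[? ?] ?] ?] ?]; reflexivity. }
  apply continuous_comp. apply continuous_comp. apply continuous_comp.
  apply continuous_fst. apply continuous_fst. apply continuous_fst. apply continuous_snd.
Qed.
Lemma coord2_cont : forall z, continuous (coord 2) z.
Proof.
  intros [[[[t x1] x2] p1] p2].
  apply continuous_ext with (f := fun z : pt => snd (fst (fst z))).
  { intros [[[[? ?] ?] ?] ?]; reflexivity. }
  apply continuous_comp. apply continuous_comp.
  apply continuous_fst. apply continuous_fst. apply continuous_snd.
Qed.

Lemma pv1 G F1 F2 lam : forall j z,
  partial (fun y => coord 1 (v_lam G F1 F2 lam y)) j z = match j with 3 => 1 | _ => 0 end.
Proof.
  intros j [[[[t x1] x2] p1] p2]. unfold partial.
  destruct j as [|[|[|[|[|j]]]]]; simpl; apply is_derive_unique; auto_derive; auto; try ring; try field.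
  all: idtac.
Qed.
Lemma pv2 G F1 F2 lam : forall j z,
  partial (fun y => coord 2 (v_lam G F1 F2 lam y)) j z = match j with 4 => 1 | _ => 0 end.
Proof.
  intros j [[[[t x1] x2] p1] p2]. unfold partial.
  destruct j as [|[|[|[|[|j]]]]]; simpl; apply is_derive_unique; auto_derive; auto; try ring; try field.
  all: idtac.
Qed.

Lemma per_nat (f : R -> R) T : (forall t, f (t + T) = f t) ->
  forall n u, f (u + INR n * T) = f u.
Proof.
  intros H n; induction n as [|n IH]; intro u.
  - simpl; f_equal; ring.
  - rewrite S_INR. replace (u + (INR n + 1) * T) with ((u + INR n * T) + T) by ring.
    rewrite H; auto.
Qed.

Lemma per_int (f : R -> R) T : (forall t, f (t + T) = f t) ->
  forall k u, f (u + IZR k * T) = f u.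
Proof.
  intros H k u. destruct (Z_le_gt_dec 0 k) as [Hk|Hk].
  - rewrite <- (Z2Nat.id k Hk), <- INR_IZR_INZ. apply per_nat; auto.
  - assert (Hk' : (0 <= - k)%Z) by lia.
    replace (IZR k) with (- IZR (- k)) by (rewrite opp_IZR; ring).
    rewrite <- (Z2Nat.id (-k) Hk'), <- INR_IZR_INZ.
    rewrite <- (per_nat f T H (Z.to_nat (-k)) (u + - INR (Z.to_nat (- k)) * T)).
    f_equal; ring.
Qed.

Lemma bound_F (T : R) (F1 F2 : R -> R) :
  0 < T ->
  (forall t, F1 (t + T) = F1 t /\ F2 (t + T) = F2 t) ->
  is_C1 F1 -> is_C1 F2 ->
  exists M, 0 <= M /\ forall t, Rabs (F1 t) + Rabs (F2 t) <= M.
Proof.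
  intros HT Hp H1 H2.
  set (g := fun t => Rabs (F1 t) + Rabs (F2 t)).
  destruct (continuity_ab_maj g 0 T) as [Mx [HM _]]. lra.
  { intros c _. apply continuity_pt_filterlim. unfold g.
    apply (continuous_plus (fun t => Rabs (F1 t)) (fun t => Rabs (F2 t))).
    - apply (continuous_comp F1 Rabs). apply (ex_derive_continuous (K:=R_AbsRing) (V:=R_NormedModule)), H1. apply continuous_Rabs.
    - apply (continuous_comp F2 Rabs). apply (ex_derive_continuous (K:=R_AbsRing) (V:=R_NormedModule)), H2. apply continuous_Rabs. }
  exists (g Mx). split. unfold g; pose proof (Rabs_pos (F1 Mx)); pose proof (Rabs_pos (F2 Mx)); lra.
  intro t.
  set (k := Int_part (t / T)).
  set (u := t - IZR k * T).
  destruct (base_Int_part (t / T)) as [B1 B2]. fold k in B1, B2.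
  assert (Hu : 0 <= u <= T).
  { unfold u. assert (IZR k * T <= t / T * T) by (apply Rmult_le_compat_r; lra).
    assert (t / T * T - T < IZR k * T).
    { replace (t / T * T - T) with ((t/T - 1) * T) by ring. apply Rmult_lt_compat_r; lra. }
    replace (t / T * T) with t in * by (field; lra). lra. }
  replace t with (u + IZR k * T) by (unfold u; ring).
  unfold g. rewrite (per_int F1 T), (per_int F2 T).
  apply HM; auto. intro; apply Hp. intro; apply Hp.
Qed.

Theorem lemma4p1 (G T : R) (F1 F2 : R -> R) :
  0 < G -> 0 < T ->
  (forall t, F1 (t + T) = F1 t /\ F2 (t + T) = F2 t) ->
  is_C1 F1 -> is_C1 F2 ->
  exists a0, 0 < a0 < 1 /\
    forall a, a0 <= a < 1 ->
      forall lam, 0 <= lam <= 1 ->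
        curvature_bound_function RxOmega (v_lam G F1 F2 lam) (m_a a).
Proof.
  intros HG HT Hp H1 H2.
  destruct (bound_F T F1 F2 HT Hp H1 H2) as [M [HM0 HM]].
  set (d := Rmin (1/2) (G / (4 * M + 4))).
  assert (Hd : 0 < d <= 1/2 /\ d <= G / (4 * M + 4)).
  { unfold d. split; [split|]. apply Rmin_pos; [lra| apply Rdiv_lt_0_compat; lra].
    apply Rmin_l. apply Rmin_r. }
  exists (sqrt (1 - d^2)). split.
  { assert (d^2 <= 1/4) by nra. assert (0 < d^2) by nra. split. apply sqrt_lt_R0. lra. assert (sqrt (1-d^2) < sqrt 1) by (apply sqrt_lt_1; lra). rewrite sqrt_1 in *. lra. }
  intros a Ha lam Hlam. split.
  - intros z _. split.
    + intros i Hi. split.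
      * destruct z as [[[[t x1] x2] p1] p2]. unfold m_a.
        destruct i as [|[|[|[|[|i]]]]]; simpl; auto_derive; auto.
      * rewrite pm. destruct i as [|[|[|[|[|i]]]]];
        first [apply continuous_const | apply coord1_cont | apply coord2_cont].
    + intros i j Hi Hj. rewrite pm, ppm. split; [|apply continuous_const].
      destruct z as [[[[t x1] x2] p1] p2].
      destruct j as [|[|[|j]]]; destruct i as [|[|[|[|[|i]]]]]; simpl; auto_derive; auto.
  - intros [[[[t x1] x2] p1] p2] Hz Hm HDe.
    unfold D2e_quad, De_Dv, De, sum5 in *. cbn [sum_f_R0] in *.
    rewrite !pm in *. rewrite !ppm. cbn [fm fmm] in *.
    rewrite ?pv1, ?pv2.
    unfold m_a, RxOmega in *. simpl in *.
    assert (Hn : x1 * (x1 * 1) + x2 * (x2 * 1) = a * (a * 1)) by lra.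
    assert (xp : x1 * p1 + x2 * p2 = 0) by (ring_simplify in HDe; lra).
    rewrite xp. unfold Rdiv. rewrite !Rmult_0_l.
    set (n := x1 * (x1 * 1) + x2 * (x2 * 1)) in *.
    set (s := sqrt (1 - n)).
    set (X := x1 * F1 t + x2 * F2 t).
    set (P := p1 * (p1 * 1) + p2 * (p2 * 1)).
    match goal with |- ?L > 0 => replace L with (P * (1 - n) + G * s * n - lam * X * (1 - n)) by (unfold P, n, X; ring) end.
    assert (HP : 0 <= P) by (unfold P; nra).
    assert (Hs2 : s * s = 1 - n) by (apply sqrt_sqrt; lra).
    assert (Hs0 : 0 <= s) by apply sqrt_pos.
    pose proof (sqrt_sqrt (1 - d^2)) as Ha0.
    pose proof (sqrt_pos (1 - d^2)) as Ha0p.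
    assert (d*d <= 1/4) by nra.
    assert (Ha0' : sqrt (1 - d^2) * sqrt (1 - d^2) = 1 - d^2) by (apply Ha0; simpl; nra).
    simpl in Ha0', Ha0p.
    assert (Han : sqrt (1 - d * (d * 1)) * sqrt (1 - d * (d * 1)) <= a * a) by (apply Rmult_le_compat; lra).
    assert (Hsd : s <= d).
    { destruct (Rle_lt_dec s d) as [|Hc]; auto. exfalso. nra. }
    assert (Hs : 0 < s).
    { destruct Hs0 as [|E]; auto. exfalso. rewrite <- E in Hs2. nra. }
    assert (HX : Rabs X <= M).
    { unfold X. eapply Rle_trans. apply Rabs_triang. rewrite !Rabs_mult.
      assert (x1*x1+x2*x2 < 1) by (unfold n in Hz; lra).
      assert (Rabs x1 <= 1) by (apply Rabs_le; split; nra).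
      assert (Rabs x2 <= 1) by (apply Rabs_le; split; nra).
      pose proof (HM t). pose proof (Rabs_pos (F1 t)). pose proof (Rabs_pos (F2 t)).
      pose proof (Rabs_pos x1). pose proof (Rabs_pos x2). nra. }
    pose proof (Rle_abs X). pose proof (Rabs_pos X).
    assert (HlX : lam * X <= M) by nra.
    assert (HMd : 4 * M * d < G).
    { destruct Hd as [[Hd0 _] Hd1]. 
      assert (d * (4 * M + 4) <= G).
      { apply Rmult_le_reg_r with (/ (4 * M + 4)). apply Rinv_0_lt_compat; lra.
        rewrite Rmult_assoc, Rinv_r by lra. unfold Rdiv in Hd1. lra. }
      lra. }
    rewrite <- Hs2.
    assert (lam * X * s <= M * d) by nra.
    assert (0 < G * n - lam * X * s) by nra.
    nra.
Qed.
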